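(* Let $P$ be a finitary polynomial endofunctor and let $\mu$ be the Möbius function of the incidence bialgebra of $P$-trees. Then for every $P$-forest $T$, \[ \mu(T)=\begin{cases}(-1)^n & \text{if every connected component of $T$ is either a $P$-corolla or an isolated edge (nodeless tree), $n$ being the number of $P$-corollas},\\ 0&\text{otherwise.}\end{cases} \]
   Context: A finitary polynomial endofunctor $P:\mathbf{Grpd}_{/I}\to\mathbf{Grpd}_{/I}$ is given by a diagram of groupoids $I\leftarrow E\xrightarrow{p}B\to I$ such that the fibres of $p$ are finite. A $P$-tree is a finite rooted tree in the polynomial sense (it has a root edge and leaves, and may have no nodes, in which case it is a single edge) whose edges are decorated by objects of $I$ and nodes by objects of $B$, compatibly: a node decorated by $b$ has its outgoing edge decorated by the image of $b$ in $I$, and its incoming edges are in bijection with the fibre $p^{-1}(b)$ compatibly with the $I$-decorations. A $P$-corolla is a $P$-tree with exactly one node; an isolated edge is a nodeless $P$-tree. A $P$-forest is a finite disjoint union of $P$-trees. An admissible cut $c$ of a $P$-tree $T$ is a set of edges (possibly including leaves or the root edge) such that every path from a leaf to the root passes through exactly one edge of $c$; cutting each edge of $c$ in two yields a tree $R_c(T)$ containing the root and a forest $P^c(T)$ with one tree per edge of $c$. The incidence bialgebra of $P$-trees (the incidence bialgebra of the two-sided bar construction of the free monad on $P$) is spanned by isomorphism classes of $P$-forests, with product disjoint union and comultiplication $\Delta(T)=\sum_c P^c(T)\otimes R_c(T)$ on trees, extended multiplicatively; the counit is $\varepsilon(F)=1$ if $F$ has no nodes and $0$ otherwise. Its dual algebra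 consists of functions on isomorphism classes of $P$-forests with the dual convolution product; the zeta function is $\zeta\equiv1$ and the Möbius function $\mu$ is its convolution inverse. *)

(* Defs.v *)
From HB Require Import structures.
From mathcomp Require Import all_boot all_algebra.
Set Implicit Arguments. Unset Strict Implicit. Unset Printing Implicit Defensive.
Import GRing.Theory.
Local Open Scope ring_scope.

(* A finitary polynomial endofunctor  I <- E -> B -> I  of groupoids,
   recorded through its objects: [I] objects of I, [Iiso i j] = "i and j are
   isomorphic in the groupoid I", [B] objects of B, [E b] the (finite) fibre
   p^{-1}(b), [src b e] the image in I of e in the fibre, [tgt b] image of b in I. *)
Record polyFun := PolyFun {
  pI : Type;
  pIiso : pI -> pI -> Prop;
  pB : Type;
  pE : pB -> finType;
  psrc : forall b, pE b -> pI;
  ptgt : pB -> pI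
}.

Section Trees.
Variable P : polyFun.

(* Planar representatives of trees with edges decorated by I and nodes by B:
   [Edge i] is an isolated edge decorated by i; [Node i b ch] is a node
   decorated by b, whose outgoing (root) edge is decorated by i and whose
   incoming edges are the roots of the subtrees [ch]. *)
Inductive tree : Type :=
| Edge of pI P
| Node of pI P & pB P & seq tree.

Definition root_lab (T : tree) : pI P :=
  match T with Edge i => i | Node i _ _ => i end.

(* P-tree condition: the incoming edges of a node decorated by b are in
   bijection (via the enumeration of the fibre) with p^{-1}(b), compatibly
   with the I-decorations, and the outgoing edge is decorated by the image of b. *)
Fixpoint wf_tree (T : tree) : Prop :=
  match T with
  | Edge _ => True
  | Node i b ch =>
      [/\ pIiso (ptgt b) i,
          size ch = #|pE b|,
          (forall k : 'I_#|pE b|,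
              pIiso (psrc (enum_val k)) (root_lab (nth (Edge i) ch k)))
        & (fix wfl (l : seq tree) : Prop :=
             match l with [::] => True | c :: l' => wf_tree c /\ wfl l' end) ch]
  end.

Definition forest := seq tree.
Fixpoint wf_forest (F : forest) : Prop :=
  match F with [::] => True | T :: F' => wf_tree T /\ wf_forest F' end.

Fixpoint nnodes (T : tree) : nat :=
  match T with
  | Edge _ => 0
  | Node _ _ ch => (sumn (map nnodes ch)).+1
  end.

Definition nodeless (F : forest) : bool := all (fun T => nnodes T == 0)%N F.

Definition is_edge (T : tree) : bool := if T is Edge _ then true else false.
Definition is_corolla (T : tree) : bool :=
  if T is Node _ _ ch then all is_edge ch else false.

Fixpoint choices {A : Type} (ls : seq (seq A)) : seq (seq A) :=
  match ls with
  | [::] => [:: [::]]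
  | l :: ls' => [seq x :: r | x <- l, r <- choices ls']
  end.

(* All admissible cuts c of T, as pairs (P^c(T), R_c(T)). Either the root
   edge is cut (P^c = T, R_c = root edge), or T is a node and an admissible
   cut is chosen in each subtree. *)
Fixpoint cuts (T : tree) : seq (forest * tree) :=
  match T with
  | Edge i => [:: ([:: Edge i], Edge i)]
  | Node i b ch =>
      ([:: T], Edge i) ::
      [seq (flatten (map fst cs), Node i b (map snd cs))
      | cs <- choices (map cuts ch)]
  end.

(* Comultiplication extended multiplicatively to forests. *)
Definition fcuts (F : forest) : seq (forest * forest) :=
  [seq (flatten (map fst cs), map snd cs) | cs <- choices (map cuts F)].

Definition conv (R : nzRingType) (f g : forest -> R) (F : forest) : R :=
  \sum_(c <- fcuts F) f c.1 * g c.2.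

Definition zeta (R : nzRingType) (F : forest) : R := 1.
Definition counit (R : nzRingType) (F : forest) : R :=
  if nodeless F then 1 else 0.

End Trees.

(* Main.v *)
Require Import Defs.
From mathcomp Require Import all_boot all_algebra.
From Stdlib Require List.
From mathcomp Require Import zify.
Import GRing.Theory.
Local Open Scope ring_scope.
Set Implicit Arguments. Unset Strict Implicit.

Lemma In_flatten (A : Type) (x : A) (ss : seq (seq A)) :
  List.In x (flatten ss) -> exists s, List.In s ss /\ List.In x s.
Proof.
elim: ss => [|s ss IH] //= H.
have [H1|H1] := List.in_app_or _ _ _ H.
  by exists s; split=> //; left.
by have [t [H2 H3]] := IH H1; exists t; split=> //; right.
Qed.

Lemma In_map (A B : Type) (f : A -> B) (y : B) (s : seq A) :
  List.In y (map f s) -> exists x, List.In x s /\ y = f x.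
Proof.
elim: s => [|a s IH] //= [<-|H]; first by exists a; split=> //; left.
by have [x [H1 H2]] := IH H; exists x; split=> //; right.
Qed.

Lemma In_choices (A B : Type) (h : B -> seq A) (F : seq B) cs :
  List.In cs (choices (map h F)) -> List.Forall2 (fun c t => List.In c (h t)) cs F.
Proof.
elim: F cs => [|t F IH] cs /=; first by move=> [<-|[]]; constructor.
move=> H; have [s [H1 H2]] := In_flatten H.
have [x [Hx Es]] := In_map H1; subst s.
have [r [Hr Er]] := In_map H2; subst cs.
constructor=> //; exact: IH.
Qed.

Lemma big_choices (R : nzRingType) (A : Type) (ls : seq (seq A)) (h : A -> R) :
  \sum_(cs <- choices ls) \prod_(c <- cs) h c = \prod_(l <- ls) \sum_(x <- l) h x.
Proof.
elim: ls => [|l ls IH] /=; first by rewrite !big_cons !big_nil addr0.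
rewrite big_allpairs_dep big_cons mulr_suml; apply: eq_bigr => x _.
by rewrite -IH mulr_sumr; apply: eq_bigr => r _; rewrite big_cons.
Qed.

Lemma eq_big_In (R : nzRingType) (A : Type) (s : seq A) (F1 F2 : A -> R) :
  (forall x, List.In x s -> F1 x = F2 x) -> \sum_(x <- s) F1 x = \sum_(x <- s) F2 x.
Proof.
elim: s => [|a s IH] H; first by rewrite !big_nil.
rewrite !big_cons H; last by left.
by rewrite IH // => x Hx; apply: H; right.
Qed.

Lemma natr_all (R : nzRingType) (A : Type) (p : pred A) (s : seq A) :
  ((all p s)%:R : R) = \prod_(x <- s) (p x)%:R.
Proof.
elim: s => [|a s IH] /=; first by rewrite big_nil.
by rewrite big_cons -IH; case: (p a); rewrite ?mul1r ?mul0r.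
Qed.

Definition tree_ind2 (P : polyFun) (Q : tree P -> Prop)
  (HE : forall i, Q (@Edge P i))
  (HN : forall i b ch, List.Forall Q ch -> Q (Node i b ch)) : forall T, Q T :=
  fix F T := match T with
  | Edge i => HE i
  | Node i b ch => HN i b ch
      ((fix G l := match l return List.Forall Q l with
        | nil => List.Forall_nil _
        | c :: l' => @List.Forall_cons _ Q c l' (F c) (G l') end) ch)
  end.

Section S.
Variable P : polyFun.
Notation nodesF F := (sumn (map (@nnodes P) F)).

Lemma wfl_Forall (ch : seq (tree P)) :
  (fix wfl (l : seq (tree P)) : Prop :=
     match l with [::] => True | c :: l' => wf_tree c /\ wfl l' end) ch
  <-> List.Forall (@wf_tree P) ch.
Proof.
elim: ch => [|c l IH] /=; first by split=> _ //; constructor.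
split; first by case=> h1 h2; constructor=> //; apply/IH.
by move=> H; inversion H; subst; split=> //; apply/IH.
Qed.

Lemma wff_Forall (F : forest P) : wf_forest F <-> List.Forall (@wf_tree P) F.
Proof.
elim: F => [|c l IH] /=; first by split=> _ //; constructor.
split; first by case=> h1 h2; constructor=> //; apply/IH.
by move=> H; inversion H; subst; split=> //; apply/IH.
Qed.

Lemma F2_comb (A B : Type) (Q : B -> Prop) (Rl : A -> B -> Prop) cs ts :
  List.Forall Q ts -> List.Forall2 Rl cs ts ->
  List.Forall2 (fun c t => Q t /\ Rl c t) cs ts.
Proof.
move=> HQ H; elim: H HQ => [|c t cs' ts' Hr _ IH] HQ; first by constructor.
by inversion HQ; subst; constructor; [split | apply: IH].
Qed.

Lemma F2_impl (A B : Type) (R1 R2 : A -> B -> Prop) cs ts :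
  (forall c t, R1 c t -> R2 c t) -> List.Forall2 R1 cs ts -> List.Forall2 R2 cs ts.
Proof. by move=> H; elim=> [|c t cs' ts' Hr _ IH]; constructor; auto. Qed.

Lemma F2_size (A B : Type) (Rl : A -> B -> Prop) cs ts :
  List.Forall2 Rl cs ts -> size cs = size ts.
Proof. by elim=> //= c t cs' ts' _ _ ->. Qed.

Lemma Forall_and' (A : Type) (Q1 Q2 : A -> Prop) l :
  List.Forall Q1 l -> List.Forall Q2 l -> List.Forall (fun x => Q1 x /\ Q2 x) l.
Proof.
elim=> [|x l' H1 _ IH] H; first by constructor.
by inversion H; subst; constructor; [split | apply: IH].
Qed.

Lemma cuts2_nodes (cs : seq (forest P * tree P)) (ts : seq (tree P)) :
  List.Forall2 (fun c t => nodesF c.1 + nnodes c.2 = nnodes t /\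
                           (nodesF c.1 = 0 -> c.2 = t))%N cs ts ->
  (nodesF (flatten ([seq i.1 | i <- cs])) + nodesF ([seq i.2 | i <- cs]) = nodesF ts /\
   (nodesF (flatten ([seq i.1 | i <- cs])) = 0 -> [seq i.2 | i <- cs] = ts))%N.
Proof.
elim=> [|c t cs' ts' [H1 H2] _ [IH1 IH2]] //=.
rewrite map_cat sumn_cat; split; first by rewrite -H1 -IH1 addnACA.
by move/eqP; rewrite addn_eq0 => /andP [/eqP /H2 -> /eqP /IH2 ->].
Qed.

Lemma cut_nodes (T : tree P) : forall c, List.In c (cuts T) ->
  (nodesF c.1 + nnodes c.2 = nnodes T /\ (nodesF c.1 = 0 -> c.2 = T))%N.
Proof.
elim/tree_ind2: T => [i|i b ch IH] c /=.
  by move=> [<-|[]] /=.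
move=> [<-|H] /=; first by rewrite !addn0.
have [cs [Hcs ->]] := In_map H.
have H2 := In_choices Hcs.
have [E1 E2] := cuts2_nodes (F2_impl (fun c t (H : _ /\ _) => H.1 c H.2) (F2_comb IH H2)).
split=> /=; first by rewrite addnS E1.
by move=> /E2 ->.
Qed.

Lemma F2_nth_root (cs : seq (forest P * tree P)) (ts : seq (tree P)) :
  List.Forall2 (fun c t => root_lab c.2 = root_lab t) cs ts ->
  forall k d, root_lab (nth d ([seq i.2 | i <- cs]) k) = root_lab (nth d ts k).
Proof.
elim=> [|c t cs' ts' H _ IH] [|k] d //=; exact: IH.
Qed.

Lemma F2_wf (cs : seq (forest P * tree P)) (ts : seq (tree P)) :
  List.Forall2 (fun c t => wf_tree c.2) cs ts -> List.Forall (@wf_tree P) ([seq i.2 | i <- cs]).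
Proof. by elim=> [|c t cs' ts' H _ IH] /=; constructor. Qed.

Lemma cut_wf (T : tree P) : wf_tree T -> forall c, List.In c (cuts T) ->
  wf_tree c.2 /\ root_lab c.2 = root_lab T.
Proof.
elim/tree_ind2: T => [i|i b ch IH] /=.
  by move=> _ c [<-|[]].
move=> [h1 h2 h3 /wfl_Forall h4] c [<-|H] //=.
have [cs [Hcs ->]] := In_map H.
have H2 := In_choices Hcs.
have HF : List.Forall2 (fun c t => wf_tree c.2 /\ root_lab c.2 = root_lab t) cs ch.
  by apply: F2_impl (F2_comb (Forall_and' IH h4) H2) => c' t [[Ht Hw] Hin]; exact: Ht Hw c' Hin.
split=> //=; split=> //.
- by rewrite size_map (F2_size HF) h2.
- by move=> k; rewrite (F2_nth_root (F2_impl (fun c t (H : _ /\ _) => proj2 H) HF)); exact: h3.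
- by apply/wfl_Forall; exact: F2_wf (F2_impl (fun c t (H : _ /\ _) => proj1 H) HF).
Qed.

Lemma fcut_wf (F : forest P) cs : wf_forest F ->
  List.In cs (choices (map (@cuts P) F)) -> wf_forest ([seq i.2 | i <- cs]).
Proof.
move=> /wff_Forall HF /In_choices H2; apply/wff_Forall.
apply: F2_wf; apply: F2_impl (F2_comb HF H2).
by move=> c t [h1 h2]; have [] := cut_wf h1 h2.
Qed.

Lemma fcut_nodes (F : forest P) cs :
  List.In cs (choices (map (@cuts P) F)) ->
  (nodesF (flatten ([seq i.1 | i <- cs])) + nodesF ([seq i.2 | i <- cs]) = nodesF F /\ (nodesF (flatten ([seq i.1 | i <- cs])) = 0 -> [seq i.2 | i <- cs] = F))%N.
Proof.
move=> /In_choices H2; apply: cuts2_nodes; apply: F2_impl H2.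
by move=> c t; apply: cut_nodes.
Qed.


Definition g (R : nzRingType) (T : tree P) : R :=
  match T with Edge _ => 1 | Node _ _ ch => if all (@is_edge P) ch then -1 else 0 end.

Definition fm (R : nzRingType) (F : forest P) : R :=
  if all (fun T => is_corolla T || is_edge T) F
  then (-1) ^+ count (@is_corolla P) F else 0.

Lemma fm_prod (R : nzRingType) (F : forest P) : fm R F = \prod_(T <- F) g R T.
Proof.
rewrite /fm; elim: F => [|T F IH] /=; first by rewrite big_nil expr0.
rewrite big_cons -IH; case: T => [i|i b ch] /=; first by rewrite mul1r.
case: (all (@is_edge P) ch) => /=; last by rewrite mul0r.
by case: (all _ F); rewrite ?mulr0 // add1n exprS.
Qed.

Lemma counit_prod (R : nzRingType) (F : forest P) :
  counit R F = \prod_(T <- F) ((nnodes T == 0)%N)%:R.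
Proof. by rewrite /counit /nodeless -natr_all; case: all. Qed.

Lemma edge_count (R : nzRingType) (t : tree P) :
  \sum_(c <- cuts t) ((is_edge c.2)%:R : R) = 1.
Proof.
case: t => [i|i b ch] /=; first by rewrite big_cons big_nil addr0.
by rewrite big_cons /= big_map big1 ?addr0.
Qed.

Lemma g_sum (R : nzRingType) (T : tree P) :
  \sum_(c <- cuts T) g R c.2 = ((nnodes T == 0)%N)%:R.
Proof.
case: T => [i|i b ch] /=; first by rewrite big_cons big_nil addr0.
rewrite big_cons big_map /=.
have -> : \sum_(cs <- choices [seq cuts i | i <- ch])
      (if all (@is_edge P) [seq i.2 | i <- cs] then -1 else 0 : R)
    = - \sum_(cs <- choices [seq cuts i | i <- ch]) \prod_(c <- cs) (is_edge c.2)%:R.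
  rewrite -sumrN; apply: eq_bigr => cs _.
  by rewrite all_map -natr_all; case: all; rewrite ?oppr0.
by rewrite big_choices big_map big1 ?subrr // => t _; apply: edge_count.
Qed.

Lemma conv_zeta_fm (R : nzRingType) (F : forest P) :
  conv (@zeta P R) (fm R) F = counit R F.
Proof.
rewrite /conv /fcuts big_map counit_prod.
under eq_bigr => cs _ do rewrite /zeta mul1r fm_prod big_map.
by rewrite big_choices big_map; apply: eq_bigr => T _; apply: g_sum.
Qed.

Lemma flat_nodes0 (cs : seq (forest P * tree P)) :
  (nodesF (flatten ([seq i.1 | i <- cs])) == 0)%N = all (fun c => nodesF c.1 == 0)%N cs.
Proof.
by elim: cs => [|c cs IH] //=; rewrite map_cat sumn_cat addn_eq0 IH.
Qed.

Lemma prod_Forall1 (R : nzRingType) (A : Type) (X : A -> R) l :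
  List.Forall (fun t => X t = 1) l -> \prod_(t <- l) X t = 1.
Proof. by elim=> [|x l' H _ IH]; rewrite ?big_nil // big_cons H IH mul1r. Qed.

Lemma count_sum (R : nzRingType) (T : tree P) :
  \sum_(c <- cuts T) ((nodesF c.1 == 0)%N)%:R = 1 :> R.
Proof.
elim/tree_ind2: T => [i|i b ch IH] /=; first by rewrite big_cons big_nil addr0.
rewrite big_cons /= add0r big_map.
under eq_bigr => cs _ do rewrite /= flat_nodes0 natr_all.
by rewrite big_choices big_map; apply: prod_Forall1.
Qed.

Lemma fcount (R : nzRingType) (F : forest P) :
  \sum_(cs <- choices (map (@cuts P) F))
     ((nodesF (flatten ([seq i.1 | i <- cs])) == 0)%N)%:R = 1 :> R.
Proof.
under eq_bigr => cs _ do rewrite flat_nodes0 natr_all.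
rewrite big_choices big_map big1 // => T _; exact: count_sum.
Qed.

End S.

Unset Implicit Arguments.

Theorem corollary3p7 (P : polyFun) (R : nzRingType) (mu : forest P -> R)
  (Hl : forall F : forest P, wf_forest F -> conv mu (@zeta P R) F = counit R F)
  (Hr : forall F : forest P, wf_forest F -> conv (@zeta P R) mu F = counit R F) :
  forall F : forest P, wf_forest F ->
    mu F = if all (fun T => is_corolla T || is_edge T) F
           then (-1) ^+ count (@is_corolla P) F else 0.
Proof.
suff H : forall n (F : forest P), (sumn (map (@nnodes P) F) < n)%N -> wf_forest F -> mu F = fm R F.
  by move=> F HF; exact: (H _ F (ltnSn _) HF).
elim=> [|n IH] F // Hn Hwf.
have E1 := Hr F Hwf; have E2 := conv_zeta_fm R F.
have : \sum_(c <- fcuts F) (zeta R c.1 * mu c.2 - zeta R c.1 * fm R c.2) = 0.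
  by rewrite sumrB; rewrite /conv in E1 E2; rewrite E1 E2 subrr.
rewrite /fcuts big_map => E.
rewrite (@eq_big_In R _ _ _ (fun cs =>
   ((sumn (map (@nnodes P) (flatten [seq i.1 | i <- cs])) == 0)%N)%:R * (mu F - fm R F))) in E;
  last first.
  move=> cs Hcs /=; rewrite /zeta !mul1r.
  have [N1 N2] := fcut_nodes Hcs.
  case: eqP => H0; first by rewrite N2 // mul1r.
  rewrite mul0r IH ?subrr //; last exact: fcut_wf Hwf Hcs.
  rewrite -N1 in Hn; move: Hn H0.
  case: (sumn [seq nnodes i | i <- flatten _]) => [//|k].
  by rewrite addSn ltnS => H _; exact: leq_ltn_trans (leq_addl k _) H.
rewrite -mulr_suml fcount mul1r in E.
by apply/eqP; rewrite -subr_eq0; apply/eqP.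
Qed.
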